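(* There is an integer $n_1\ge 1$ such that every graph $H$ with $n\ge n_1$ vertices has geometric pebbling threshold at least $\sqrt{n\log 2}$.
   Context: Pebbling: a distribution on a graph assigns a nonnegative integer number of pebbles to each vertex. A pebbling move removes two pebbles from a vertex having at least two pebbles and adds one pebble to an adjacent vertex. A vertex is pebblable if some sequence of pebbling moves from the distribution ends with at least one pebble on it; a distribution is solvable if every vertex is pebblable. The geometric distribution on $\{0,1,2,\dots\}$ with parameter $0<p\le 1$ assigns probability $p(1-p)^k$ to $k$. For a graph $H$ with $n>0$ vertices, the geometric pebbling threshold of $H$ is the unique positive real $x$ such that, if an independent geometrically distributed number of pebbles with parameter $(1+x/n)^{-1}$ is placed on each vertex of $H$, the probability that the distribution is solvable equals $\tfrac12$. $\log$ is the natural logarithm. *)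

(* Defs.v *)
From Stdlib Require Import Reals Lra Arith List Relations.
Import ListNotations.
Open Scope R_scope.

(* A graph on the vertex set {0,...,n-1}: a symmetric irreflexive relation
   on nat; only pairs of vertices < n matter. *)
Definition simple_graph (n : nat) (adj : nat -> nat -> Prop) : Prop :=
  (forall u v, adj u v -> adj v u) /\ (forall u, ~ adj u u).

(* A distribution: number of pebbles on each vertex (values at v >= n are irrelevant). *)
Definition distribution := nat -> nat.

Definition pebbling_move (n : nat) (adj : nat -> nat -> Prop)
    (D D' : distribution) : Prop :=
  exists u v, (u < n)%nat /\ (v < n)%nat /\ adj u v /\ (2 <= D u)%nat /\
    D' = (fun w => if Nat.eqb w u then (D u - 2)%nat
                   else if Nat.eqb w v then S (D v) else D w).

Definition reachable (n : nat) (adj : nat -> nat -> Prop) : relation distribution :=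
  clos_refl_trans distribution (pebbling_move n adj).

Definition pebblable (n : nat) (adj : nat -> nat -> Prop) (D : distribution) (r : nat) : Prop :=
  exists D', reachable n adj D D' /\ (1 <= D' r)%nat.

Definition solvable (n : nat) (adj : nat -> nat -> Prop) (D : distribution) : Prop :=
  forall r, (r < n)%nat -> pebblable n adj D r.

Definition dist_of (l : list nat) : distribution := fun v => nth v l 0%nat.

Fixpoint prodR (k : nat) (f : nat -> R) : R :=
  match k with O => 1 | S k' => prodR k' f * f k' end.

(* probability of the configuration l under independent Geometric(q) pebbles:
   prod_v q (1-q)^(l_v) *)
Definition geom_weight (n : nat) (q : R) (l : list nat) : R :=
  prodR n (fun v => q * (1 - q) ^ (nth v l 0%nat)).

Definition sum_weights (n : nat) (q : R) (L : list (list nat)) : R :=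
  fold_right (fun l acc => geom_weight n q l + acc) 0 L.

(* Sums of probabilities of finitely many distinct solvable configurations.
   The probability of the (countable) event "solvable" is the supremum of this set. *)
Definition solvable_finite_sums (n : nat) (adj : nat -> nat -> Prop) (q : R) : R -> Prop :=
  fun s => exists L : list (list nat),
    NoDup L /\
    Forall (fun l => length l = n /\ solvable n adj (dist_of l)) L /\
    s = sum_weights n q L.

Definition prob_solvable_is (n : nat) (adj : nat -> nat -> Prop) (q p : R) : Prop :=
  is_lub (solvable_finite_sums n adj q) p.

(* x is the geometric pebbling threshold of the graph: x > 0 and with parameter
   (1 + x/n)^{-1} the probability of solvability is 1/2 (the paper shows such x is unique). *)
Definition is_geom_threshold (n : nat) (adj : nat -> nat -> Prop) (x : R) : Prop :=
  0 < x /\ prob_solvable_is n adj (/ (1 + x / INR n)) (1 / 2).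

(* Main.v *)
Require Import Defs.
From Stdlib Require Import Reals Lra Lia List Relations.
Import ListNotations.
Open Scope R_scope.

Definition sumR {A} (w : A -> R) (L : list A) : R :=
  fold_right (fun l acc => w l + acc) 0 L.

Lemma sumR_app {A} (w : A -> R) L1 L2 : sumR w (L1 ++ L2) = sumR w L1 + sumR w L2.
Proof. induction L1; simpl; [lra|rewrite IHL1; lra]. Qed.

Lemma sumR_flat_map {A B} (w : B -> R) (f : A -> list B) L :
  sumR w (flat_map f L) = sumR (fun a => sumR w (f a)) L.
Proof. induction L; simpl; [lra| rewrite sumR_app, IHL; lra]. Qed.

Lemma sumR_map {A B} (w : B -> R) (f : A -> B) L :
  sumR w (map f L) = sumR (fun a => w (f a)) L.
Proof. induction L; simpl; [lra| rewrite IHL; lra]. Qed.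

Lemma sumR_ext_in {A} (w w' : A -> R) L :
  (forall a, In a L -> w a = w' a) -> sumR w L = sumR w' L.
Proof. induction L; simpl; intros H; [lra|]. rewrite H, IHL; auto. Qed.

Lemma sumR_scale {A} (w : A -> R) c L : sumR (fun a => c * w a) L = c * sumR w L.
Proof. induction L; simpl; [lra| rewrite IHL; lra]. Qed.

Lemma sumR_nonneg {A} (w : A -> R) L : (forall a, 0 <= w a) -> 0 <= sumR w L.
Proof. intros H; induction L; simpl; [lra| specialize (H a); lra]. Qed.

Lemma sumR_filter {A} (w : A -> R) (f : A -> bool) L :
  sumR w L = sumR w (filter f L) + sumR w (filter (fun a => negb (f a)) L).
Proof. induction L; simpl; [lra|]. destruct (f a); simpl; rewrite IHL; lra. Qed.

Lemma sumR_le_incl {A} (w : A -> R) (M : list A) :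
  (forall a, 0 <= w a) -> NoDup M -> forall X, incl M X -> sumR w M <= sumR w X.
Proof.
  intros Hw HM. induction HM as [|m M Hm HM IH]; intros X Hi.
  - simpl. apply sumR_nonneg; auto.
  - assert (Hin : In m X) by (apply Hi; left; auto).
    destruct (in_split _ _ Hin) as [X1 [X2 ->]].
    assert (incl M (X1 ++ X2)).
    { intros y Hy. assert (In y (X1 ++ m :: X2)) by (apply Hi; right; auto).
      apply in_app_or in H. apply in_or_app. destruct H as [H|[H|H]]; auto.
      subst; contradiction. }
    specialize (IH _ H). rewrite sumR_app in *. simpl. lra.
Qed.

Lemma prodR_ext k f g : (forall v, (v < k)%nat -> f v = g v) -> prodR k f = prodR k g.
Proof. induction k; simpl; intros H; auto. rewrite IHk, H; auto. Qed.

Lemma prodR_const k c : prodR k (fun _ => c) = c ^ k.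
Proof. induction k; simpl; auto. rewrite IHk; ring. Qed.

Lemma prodR_nonneg k f : (forall v, 0 <= f v) -> 0 <= prodR k f.
Proof. intros H; induction k; simpl; [lra| apply Rmult_le_pos; auto]. Qed.

Fixpoint grid (K n : nat) : list (list nat) :=
  match n with
  | O => [[]]
  | S m => flat_map (fun l => map (fun a => l ++ [a]) (seq 0 (S K))) (grid K m)
  end.

Lemma grid_in K n : forall l, length l = n -> (forall v, (v < n)%nat -> (nth v l 0 <= K)%nat) ->
  In l (grid K n).
Proof.
  induction n; intros l Hl Hv.
  - destruct l; [left; auto | simpl in Hl; lia].
  - destruct (exists_last (l := l)) as [l' [a ->]].
    { intros ->; simpl in Hl; lia. }
    rewrite length_app in Hl; simpl in Hl.
    cbn [grid]. apply in_flat_map. exists l'. split.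
    + apply IHn; [lia|]. intros v Hv'. rewrite <- (app_nth1 l' [a]) by lia. apply Hv; lia.
    + apply in_map_iff. exists a; split; auto. apply in_seq.
      specialize (Hv n ltac:(lia)). rewrite app_nth2 in Hv by lia.
      replace (n - length l')%nat with 0%nat in Hv by lia. simpl in Hv. lia.
Qed.

Lemma grid_len K n l : In l (grid K n) -> length l = n /\ (forall v, (v < n)%nat -> (nth v l 0 <= K)%nat).
Proof.
  revert l; induction n; intros l H.
  - destruct H as [<-|[]]; split; auto; intros; lia.
  - cbn [grid] in H. apply in_flat_map in H. destruct H as [l' [H1 H2]].
    apply in_map_iff in H2. destruct H2 as [a [<- Ha]]. apply in_seq in Ha.
    destruct (IHn _ H1) as [E B]. rewrite length_app; simpl. split; [lia|].
    intros v Hv. destruct (Nat.lt_ge_cases v (length l')).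
    + rewrite app_nth1 by auto. apply B; lia.
    + rewrite app_nth2 by auto. replace (v - length l')%nat with 0%nat by lia. simpl; lia.
Qed.

Lemma NoDup_flat_map_gen {A B} (f : A -> list B) L :
  NoDup L -> (forall a, NoDup (f a)) ->
  (forall a a' b, In b (f a) -> In b (f a') -> a = a') -> NoDup (flat_map f L).
Proof.
  intros HL Hf Hd. induction HL; simpl; [constructor|].
  apply NoDup_app; auto. intros b Hb Hb'. apply in_flat_map in Hb'.
  destruct Hb' as [a [Ha Hb']]. rewrite (Hd _ _ _ Hb Hb') in H; contradiction.
Qed.

Lemma grid_nodup K n : NoDup (grid K n).
Proof.
  induction n; cbn [grid]; [repeat constructor; auto|].
  apply NoDup_flat_map_gen; auto.
  - intros l. apply NoDup_map_NoDup_ForallPairs; [|apply seq_NoDup].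
    intros a b _ _ E. apply app_inj_tail in E. tauto.
  - intros l l' b H1 H2. apply in_map_iff in H1, H2.
    destruct H1 as [a [<- _]]. destruct H2 as [a' [E _]].
    apply app_inj_tail in E. symmetry; tauto.
Qed.

Definition gw (q : R) (a : nat) : R := q * (1 - q) ^ a.

Lemma geom_weight_snoc n q l a : length l = n ->
  geom_weight (S n) q (l ++ [a]) = geom_weight n q l * gw q a.
Proof.
  intros Hl. unfold geom_weight, gw. simpl. f_equal.
  - apply prodR_ext. intros v Hv. rewrite app_nth1 by lia. auto.
  - rewrite app_nth2 by lia. replace (n - length l)%nat with 0%nat by lia. auto.
Qed.

Lemma grid_sum K n q : sumR (geom_weight n q) (grid K n) = (sumR (gw q) (seq 0 (S K))) ^ n.
Proof.
  induction n.
  - simpl. unfold geom_weight. simpl. lra.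
  - cbn [grid]. rewrite sumR_flat_map.
    rewrite (sumR_ext_in _ (fun l => sumR (gw q) (seq 0 (S K)) * geom_weight n q l)).
    + rewrite sumR_scale, IHn. simpl. ring.
    + intros l Hl. rewrite sumR_map.
      destruct (grid_len _ _ _ Hl) as [E _].
      rewrite (sumR_ext_in _ (fun a => geom_weight n q l * gw q a)).
      * rewrite sumR_scale. ring.
      * intros a _. apply geom_weight_snoc; auto.
Qed.

Lemma gw_sum q m : sumR (gw q) (seq 0 m) = 1 - (1 - q) ^ m.
Proof.
  induction m; [simpl; lra|]. rewrite seq_S, sumR_app, IHm. simpl. unfold gw. ring.
Qed.

Lemma pow_le1 a k : 0 <= a <= 1 -> a ^ k <= 1.
Proof. intros H; induction k; simpl; [lra|]. assert (0 <= a ^ k) by (apply pow_le; lra). nra. Qed.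

Lemma geom_weight_nonneg n q l : 0 < q <= 1 -> 0 <= geom_weight n q l.
Proof.
  intros Hq. apply prodR_nonneg. intros v. apply Rmult_le_pos; [lra|apply pow_le; lra].
Qed.

Lemma bound_entries (M : list (list nat)) : exists K, forall l, In l M -> forall v, (nth v l 0 <= K)%nat.
Proof.
  induction M as [|l M [K HK]].
  - exists 0%nat; intros l [].
  - exists (Nat.max K (list_max l)). intros l' [E|H] v.
    + subst l'. destruct (Nat.lt_ge_cases v (length l)).
      * assert (list_max l <= list_max l)%nat by lia. apply list_max_le in H0.
        rewrite Forall_forall in H0. specialize (H0 _ (nth_In l 0%nat H)). lia.
      * rewrite nth_overflow by auto. lia.
    + specialize (HK _ H v). lia.
Qed.

Lemma sum_le_1 n q M : 0 < q <= 1 -> NoDup M -> Forall (fun l => length l = n) M ->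
  sumR (geom_weight n q) M <= 1.
Proof.
  intros Hq HM HF. destruct (bound_entries M) as [K HK].
  eapply Rle_trans.
  - apply (sumR_le_incl _ _ (fun l => geom_weight_nonneg n q l Hq) HM (grid K n)).
    intros l Hl. rewrite Forall_forall in HF. apply grid_in; auto.
  - rewrite grid_sum, gw_sum. apply pow_le1. split.
    + assert ((1-q)^(S K) <= 1) by (apply pow_le1; lra). lra.
    + assert (0 <= (1-q)^(S K)) by (apply pow_le; lra). lra.
Qed.

Lemma reach_stuck n adj D1 D2 : reachable n adj D1 D2 ->
  (forall u, (u < n)%nat -> (D1 u <= 1)%nat) -> D2 = D1.
Proof.
  unfold reachable. induction 1; intros Hb; auto.
  - destruct H as [u [v [Hu [_ [_ [H2 _]]]]]]. specialize (Hb u Hu). lia.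
  - assert (y = x) by auto. subst y. auto.
Qed.

Lemma solv_ones n adj l : length l = n -> (forall v, (v < n)%nat -> (nth v l 0 <= 1)%nat) ->
  solvable n adj (dist_of l) -> l = repeat 1%nat n.
Proof.
  intros Hl Hb Hs. apply nth_ext with (d := 0%nat) (d' := 1%nat).
  - rewrite repeat_length; auto.
  - intros v Hv. rewrite nth_repeat. rewrite Hl in Hv.
    destruct (Hs v Hv) as [D' [HR H1]].
    rewrite (reach_stuck _ _ _ _ HR Hb) in H1. unfold dist_of in H1.
    specialize (Hb v Hv). lia.
Qed.

Lemma main_bound n adj q L : 0 < q <= 1 ->
  NoDup L -> Forall (fun l => length l = n /\ solvable n adj (dist_of l)) L ->
  sum_weights n q L <= 1 - (1 - (1-q)^2) ^ n + (q * (1 - q)) ^ n.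
Proof.
  intros Hq HL HF.
  set (f := fun l : list nat => if in_dec (list_eq_dec Nat.eq_dec) l (grid 1 n) then false else true).
  change (sum_weights n q L) with (sumR (geom_weight n q) L).
  rewrite (sumR_filter _ f).
  rewrite Forall_forall in HF.
  assert (H1 : sumR (geom_weight n q) (filter f L ++ grid 1 n) <= 1).
  { apply sum_le_1; auto.
    - apply NoDup_app; [apply NoDup_filter; auto|apply grid_nodup|].
      intros a Ha Hg. apply filter_In in Ha. destruct Ha as [_ Ha]. unfold f in Ha.
      destruct in_dec; [discriminate|contradiction].
    - apply Forall_forall. intros l Hl. apply in_app_or in Hl. destruct Hl as [Hl|Hl].
      + apply filter_In in Hl. apply HF; tauto.
      + apply (grid_len _ _ _ Hl). }
  rewrite sumR_app, grid_sum, gw_sum in H1.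
  assert (H2 : sumR (geom_weight n q) (filter (fun a => negb (f a)) L) <= sumR (geom_weight n q) [repeat 1%nat n]).
  { apply sumR_le_incl; [intros; apply geom_weight_nonneg; auto|apply NoDup_filter; auto|].
    intros l Hl. apply filter_In in Hl. destruct Hl as [Hl Hf]. unfold f in Hf.
    destruct in_dec as [Hg|]; [|discriminate]. left. symmetry.
    destruct (HF _ Hl) as [Hlen Hs]. apply (solv_ones n adj); auto.
    apply (grid_len _ _ _ Hg). }
  simpl in H2. unfold geom_weight in H2 at 2.
  rewrite (prodR_ext _ _ (fun _ => q * (1 - q))) in H2.
  2:{ intros v Hv. rewrite (nth_indep _ 0%nat 1%nat) by (rewrite repeat_length; auto). rewrite nth_repeat. simpl. ring. }
  rewrite prodR_const in H2.
  replace (1 - (1 - q) ^ 2) with (1 - (1 - q) ^ 2) in * by ring.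
  simpl in H1. simpl. lra.
Qed.

Lemma exp_nmul n z : exp (INR n * z) = exp z ^ n.
Proof.
  induction n. { simpl. rewrite Rmult_0_l, exp_0; auto. }
  rewrite S_INR. simpl pow. rewrite <- IHn, <- exp_plus. f_equal; ring.
Qed.

Lemma ln2_bounds : 1/2 <= ln 2 < 1.
Proof.
  assert (E1 : 2 < exp 1) by (pose proof (exp_ineq1 1 ltac:(lra)); lra).
  assert (Eh : exp (1/2) < 2).
  { assert (exp (1/2) * exp (1/2) = exp 1) by (rewrite <- exp_plus; f_equal; lra).
    pose proof exp_le_3. pose proof (exp_pos (1/2)). nra. }
  pose proof (exp_ln 2 ltac:(lra)) as L.
  split.
  - destruct (Rle_lt_dec (1/2) (ln 2)); auto.
    pose proof (exp_increasing _ _ r). lra.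
  - destruct (Rlt_le_dec (ln 2) 1); auto.
    destruct r. + pose proof (exp_increasing _ _ H). lra. + rewrite <- H in L. lra.
Qed.

Lemma pow_le_sq t n : 0 <= t <= 1 -> (2 <= n)%nat -> t ^ n <= t ^ 2.
Proof.
  intros Ht Hn. replace n with (2 + (n - 2))%nat by lia. rewrite pow_add.
  assert (0 <= t^2) by (apply pow_le; lra).
  assert (t ^ (n-2) <= 1).
  { clear Hn. induction (n-2)%nat; simpl; [lra|]. assert (0 <= t ^ n0) by (apply pow_le; lra). nra. }
  assert (0 <= t ^ (n-2)) by (apply pow_le; lra). nra.
Qed.

Lemma analytic n x : (16 <= n)%nat -> 0 < x -> x * x < INR n * ln 2 ->
  1 - (1 - (1-(/ (1 + x / INR n)))^2) ^ n + ((/ (1 + x / INR n)) * (1 - (/ (1 + x / INR n)))) ^ n < 1/2.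
Proof.
  intros Hn Hx Hx2.
  set (q := / (1 + x / INR n)).
  set (N := INR n) in *.
  assert (HN : 16 <= N) by (unfold N; replace 16 with (INR 16) by (simpl; lra); apply le_INR; auto).
  pose proof ln2_bounds as [L1 L2].
  assert (Hq : q = N / (N + x)) by (unfold q; field; lra).
  set (t := x / (N + x)).
  assert (Ht : 1 - q = t) by (rewrite Hq; unfold t; field; lra).
  rewrite Ht.
  assert (t0 : 0 < t) by (unfold t; apply Rdiv_lt_0_compat; lra).
  assert (t1 : t < 1) by (unfold t; apply (Rmult_lt_reg_r (N + x)); [lra|]; field_simplify; lra).
  assert (q0 : 0 < q) by (rewrite Hq; apply Rdiv_lt_0_compat; lra).
  assert (q1 : q <= 1) by lra.
  assert (B1 : (q * t) ^ n <= t ^ 2).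
  { eapply Rle_trans; [apply pow_incr; split; [apply Rmult_le_pos; lra|]|].
    - instantiate (1 := t). nra.
    - apply pow_le_sq; [lra|lia]. }
  assert (Hx4 : x < N / 4) by nra.
  assert (B2 : t ^ 2 <= x * x / (N * N)).
  { unfold t. simpl. rewrite Rmult_1_r.
    apply (Rmult_le_reg_r ((N+x)*(N+x)*(N*N))); [repeat apply Rmult_lt_0_compat; lra|].
    field_simplify; try lra. nra. }
  set (u := t ^ 2).
  assert (u0 : 0 < u < 1) by (unfold u; simpl; nra).
  set (c := u / (1 - u)).
  assert (Hc : exp (- c) <= 1 - u).
  { rewrite exp_Ropp. pose proof (exp_ineq1_le c). pose proof (exp_pos c).
    unfold c in *. apply (Rmult_le_reg_r (exp (u / (1 - u)))); [lra|].
    rewrite Rinv_l by lra.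
    assert (1 + u/(1-u) = / (1 - u)) by (field; lra).
    assert ((1 - u) * (1 + u / (1 - u)) = 1) by (field; lra). nra. }
  assert (B3 : exp (- (INR n * c)) <= (1 - u) ^ n).
  { replace (- (INR n * c)) with (INR n * (- c)) by ring. rewrite exp_nmul.
    apply pow_incr. split; [left; apply exp_pos | auto]. }
  set (y := x * x / (N + 2 * x)).
  assert (Hy : INR n * c = y).
  { fold N. unfold c, u, y, t. simpl. field. split; [lra|]. split; [lra|]. nra. }
  rewrite Hy in B3.
  assert (Ly : ln 2 - y > 2 * x * ln 2 / (N + 2 * x)).
  { unfold y. apply (Rmult_gt_reg_r (N + 2*x)); [lra|]. field_simplify; try lra; nra. }
  assert (E : exp (- y) >= 1/2 * (1 + (ln 2 - y))).
  { replace (- y) with (- ln 2 + (ln 2 - y)) by ring. rewrite exp_plus, exp_Ropp, exp_ln by lra.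
    pose proof (exp_ineq1_le (ln 2 - y)). lra. }
  assert (K : x * x / (N * N) <= x * ln 2 / (N + 2 * x)).
  { apply (Rmult_le_reg_r ((N*N)*(N+2*x))); [nra|]. field_simplify; try lra.
    assert (x * (N + 2 * x) <= ln 2 * (N * N)) by nra. nra. }
  assert (K2 : 2 * x * ln 2 / (N + 2 * x) = 2 * (x * ln 2 / (N + 2 * x))) by (field; lra).
  unfold u in *. lra.
Qed.

Theorem theorem26 :
  exists n1 : nat, (1 <= n1)%nat /\
    forall (n : nat) (adj : nat -> nat -> Prop),
      (n1 <= n)%nat -> simple_graph n adj ->
      forall x : R, is_geom_threshold n adj x -> sqrt (INR n * ln 2) <= x.
Proof.
  exists 16%nat. split; [lia|].
  intros n adj Hn _ x [Hx [_ Hlub]].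
  destruct (Rle_lt_dec (sqrt (INR n * ln 2)) x) as [H|H]; auto.
  exfalso.
  pose proof ln2_bounds as [L1 L2].
  assert (HN : 16 <= INR n) by (replace 16 with (INR 16) by (simpl; lra); apply le_INR; auto).
  assert (Hs : 0 <= INR n * ln 2) by nra.
  assert (Hx2 : x * x < INR n * ln 2).
  { pose proof (sqrt_sqrt _ Hs). nra. }
  pose proof (analytic n x Hn Hx Hx2) as A.
  set (q := / (1 + x / INR n)) in *.
  assert (q0 : 0 < q) by (unfold q; apply Rinv_0_lt_compat; assert (0 < x / INR n) by (apply Rdiv_lt_0_compat; lra); lra).
  assert (q1 : q <= 1).
  { unfold q. rewrite <- Rinv_1. apply Rinv_le_contravar; [lra|].
    assert (0 < x / INR n) by (apply Rdiv_lt_0_compat; lra); lra. }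
  assert (UB : 1/2 <= 1 - (1 - (1-q)^2) ^ n + (q * (1 - q)) ^ n).
  { apply Hlub. intros s [L [HL [HF ->]]]. apply (main_bound n adj); auto. }
  lra.
Qed.
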